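(* Let $G$ be a graph, and let $(G',L,\alpha,\beta)$ be constructed from $G$ as described in the context. Let $\gamma$ be any $L$-coloring of $G'$ and let $uv\in E(G)$. If $\gamma(u)=\gamma(v)$ then $\gamma(z_{uv})=4$. If $\gamma(u)\ne\gamma(v)$, then there exists an $L$-recoloring sequence of length bounded by an absolute constant from $\gamma$ to an $L$-coloring $\gamma'$ with $\gamma'(z_{uv})\ne 4$ and $\gamma'(w)=\gamma(w)$ for all $w\in (V(G)\cup Z)\setminus\{z_{uv}\}$.
   Context: A color list assignment $L$ gives each vertex a list $L(v)\subseteq[4]=\{1,2,3,4\}$. An $L$-coloring is a proper coloring $\gamma$ with $\gamma(v)\in L(v)$ for all $v$. $\mathcal{C}(G,L)$ is the graph on $L$-colorings, two adjacent iff they differ on exactly one vertex; an $L$-recoloring sequence of length $m$ is a sequence $\gamma_0,\ldots,\gamma_m$ of $L$-colorings with consecutive ones equal or adjacent in $\mathcal{C}(G,L)$. $(a,b)$-forbidding path: for $a,b\in[4]$, a path $P$ with lists $L(x)\subseteq[4]$ and end vertices $u,v$ is $(a,b)$-forbidding from $u$ to $v$ if (i) for all $x\in L(u)$, $y\in L(v)$, there is an $L$-coloring $\gamma$ of $P$ with $\gamma(u)=x,\gamma(v)=y$ iff $x\ne a$ or $y\ne b$ (such $(x,y)$ are called admissible); and (ii) for any $L$-coloring $\gamma$ of $P$ and any admissible $(x,y)$ with $x=\gamma(u)$ or $y=\gamma(v)$, there is an $L$-recoloring sequence of $P$ from $\gamma$ to an $L$-coloring $\delta$ with $\delta(u)=x,\delta(v)=y$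 in which each internal vertex is recolored at most once and $u,v$ are not recolored until the last step. Such paths of length six exist whenever $L(u),L(v)\ne[4]$, $a\in L(u)$, $b\in L(v)$. Construction of $G'$: start with $V(G)$ (no edges among these), each $u\in V(G)$ with $L(u)=\{1,2,3\}$, $\alpha(u)=1$. For every edge $uv\in E(G)$ (with a fixed orientation $u,v$), add new vertices $x_{uv},y_{uv},z_{uv}$ with $\alpha$-value $4$ each and $L(x_{uv})=\{1,2,4\}$, $L(y_{uv})=\{3,4\}$, $L(z_{uv})=\{1,2,4\}$; add edges $ux_{uv}$, $uy_{uv}$; and add (each with its own new internal vertices, each of length six) a $(1,2)$-forbidding and a $(3,1)$-forbidding path from $u$ to $x_{uv}$, a $(2,3)$-forbidding path from $u$ to $y_{uv}$, a $(2,1)$-forbidding and a $(3,2)$-forbidding path from $v$ to $x_{uv}$, a $(1,3)$-forbidding path from $v$ to $y_{uv}$, a $(4,1)$-forbidding path from $x_{uv}$ to $z_{uv}$, and a $(4,2)$-forbidding path from $y_{uv}$ to $z_{uv}$. Let $Z=\{z_{uv}\mid uv\in E(G)\}$. Add vertices $a,b,c,d$ with $\alpha(a)=1,\alpha(b)=2,\alpha(c)=3,\alpha(d)=4$, $L(a)=\{1,2,3\}$, $L(b)=\{1,2\}$, $L(c)=\{3,4\}$, $L(d)=\{4\}$, all edges among $a,b,c,d$ except $cd$, and edges from every vertex of $Z$ to $c$. Extend $\alpha$ arbitrarily to an $L$-coloring of all internal vertices of the forbidding paths (possible since the end colors are admissible). Set $\beta(w)=\alpha(w)$ for all $w\ne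 a,b$, $\beta(a)=2$, $\beta(b)=1$. *)

(* Defs.v *)
From mathcomp Require Import all_boot.
Set Implicit Arguments. Unset Strict Implicit. Unset Printing Implicit Defensive.

Fixpoint recseq (C : Type) (P : C -> Prop) (step : C -> C -> Prop)
    (x : C) (s : seq C) : Prop :=
  match s with
  | [::] => True
  | y :: s' => [/\ P y, step x y & recseq P step y s']
  end.

Definition pcol (Ls : nat -> seq nat) (c : nat -> nat) : Prop :=
  (forall j, j < 7 -> c j \in Ls j) /\ (forall j, j < 6 -> c j != c j.+1).

Definition pstep (c c' : nat -> nat) : Prop :=
  forall i j, i < 7 -> j < 7 -> c i != c' i -> c j != c' j -> i = j.

Fixpoint nchanges (j : nat) (x : nat -> nat) (s : seq (nat -> nat)) : nat :=
  match s with
  | [::] => 0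
  | y :: s' => (x j != y j) + nchanges j y s'
  end.

Definition forbidding (Ls : nat -> seq nat) (a b : nat) : Prop :=
  (forall x y, x \in Ls 0 -> y \in Ls 6 ->
     ((exists c, [/\ pcol Ls c, c 0 = x & c 6 = y]) <-> ((x != a) || (y != b))))
  /\
  (forall (g : nat -> nat) x y, pcol Ls g -> x \in Ls 0 -> y \in Ls 6 ->
     (x != a) || (y != b) -> (x = g 0 \/ y = g 6) ->
     exists s : seq (nat -> nat),
       [/\ recseq (pcol Ls) pstep g s,
           (last g s) 0 = x, (last g s) 6 = y,
           (forall j, 0 < j < 6 -> nchanges j g s <= 1) &
           (* u,v are not recolored before the last step: all colorings of the
              sequence except the last one agree with g on the end vertices *)
           (forall i, i < size s ->
              (nth g (g :: s) i) 0 = g 0 /\ (nth g (g :: s) i) 6 = g 6)]).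

(* Vertices of G': V = vertices of G, A = (oriented) edges of G,
   gP e k i = i-th internal vertex of the k-th forbidding path of edge e. *)
Inductive gvert (V A : Type) : Type :=
| gV of V
| gX of A
| gY of A
| gZ of A
| gP of A & 'I_8 & 'I_5
| ga | gb | gc | gd.

Arguments ga {V A}. Arguments gb {V A}. Arguments gc {V A}. Arguments gd {V A}.
Arguments gV {V A}. Arguments gX {V A}. Arguments gY {V A}. Arguments gZ {V A}.
Arguments gP {V A}.

Section G'.
Variables (V : finType) (arc : rel V).
Definition arcT := {p : V * V | arc p.1 p.2}.
Definition vtx := gvert V arcT.

Definition tailv (e : arcT) : V := (val e).1.
Definition headv (e : arcT) : V := (val e).2.

(* The eight forbidding paths of the gadget of e = uv:
   0: (1,2) u -> x   1: (3,1) u -> x   2: (2,3) u -> y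
   3: (2,1) v -> x   4: (3,2) v -> x   5: (1,3) v -> y
   6: (4,1) x -> z   7: (4,2) y -> z *)
Definition pstart (e : arcT) (k : 'I_8) : vtx :=
  match val k with
  | 0 | 1 | 2 => gV (tailv e)
  | 3 | 4 | 5 => gV (headv e)
  | 6 => gX e
  | _ => gY e
  end.
Definition pend (e : arcT) (k : 'I_8) : vtx :=
  match val k with
  | 0 | 1 | 3 | 4 => gX e
  | 2 | 5 => gY e
  | _ => gZ e
  end.
Definition fa (k : 'I_8) : nat :=
  match val k with 0 => 1 | 1 => 3 | 2 => 2 | 3 => 2 | 4 => 3 | 5 => 1 | _ => 4 end.
Definition fb (k : 'I_8) : nat :=
  match val k with 0 => 2 | 1 => 1 | 2 => 3 | 3 => 1 | 4 => 2 | 5 => 3 | 6 => 1 | _ => 2 end.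

Definition pv (e : arcT) (k : 'I_8) (j : nat) : vtx :=
  if j == 0 then pstart e k
  else if j < 6 then gP e k (inord j.-1)
  else pend e k.

Definition Lst (Lint : arcT -> 'I_8 -> 'I_5 -> seq nat) (w : vtx) : seq nat :=
  match w with
  | gV _ => [:: 1; 2; 3]
  | gX _ => [:: 1; 2; 4]
  | gY _ => [:: 3; 4]
  | gZ _ => [:: 1; 2; 4]
  | gP e k i => Lint e k i
  | ga => [:: 1; 2; 3]
  | gb => [:: 1; 2]
  | gc => [:: 3; 4]
  | gd => [:: 4]
  end.

Definition base_edge (w1 w2 : vtx) : Prop :=
  (exists e : arcT, w1 = gV (tailv e) /\ (w2 = gX e \/ w2 = gY e))
  \/ (exists e k j, [/\ j < 6, w1 = pv e k j & w2 = pv e k j.+1])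
  \/ (exists e : arcT, w1 = gZ e /\ w2 = gc)
  \/ (w1 = ga /\ (w2 = gb \/ w2 = gc \/ w2 = gd))
  \/ (w1 = gb /\ (w2 = gc \/ w2 = gd)).

Definition adj (w1 w2 : vtx) : Prop := base_edge w1 w2 \/ base_edge w2 w1.

Definition Lcol (Lint : arcT -> 'I_8 -> 'I_5 -> seq nat) (g : vtx -> nat) : Prop :=
  (forall w, g w \in Lst Lint w) /\ (forall w1 w2, adj w1 w2 -> g w1 != g w2).

(* equal or adjacent in C(G',L): differ on at most one vertex *)
Definition gstep (g g' : vtx -> nat) : Prop :=
  forall w1 w2, g w1 != g' w1 -> g w2 != g' w2 -> w1 = w2.

End G'.

(* Main.v *)
Require Import Defs.
From mathcomp Require Import all_boot.
From mathcomp Require Import zify.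
From Stdlib Require Import Lia Classical ClassicalEpsilon FunctionalExtensionality.
Set Implicit Arguments. Unset Strict Implicit. Unset Printing Implicit Defensive.

Definition tot (x : nat -> nat) s :=
  nchanges 0 x s + nchanges 1 x s + nchanges 2 x s + nchanges 3 x s +
  nchanges 4 x s + nchanges 5 x s + nchanges 6 x s.

Lemma pstep_eq x x' y : (forall j, j < 7 -> x j = x' j) -> pstep x y -> pstep x' y.
Proof. move=> E H i j hi hj; rewrite -!E //; exact: H. Qed.

Lemma destut (P : (nat -> nat) -> Prop) x s : recseq P pstep x s ->
  exists t, [/\ recseq P pstep x t, size t <= tot x s &
                forall j, j < 7 -> last x t j = last x s j].
Proof.
elim: s x => [|y s IH] x /=; first by move=> _; exists [::].
case=> Py sxy /IH [t [rt st lt]].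
case Hd: [|| x 0 != y 0, x 1 != y 1, x 2 != y 2, x 3 != y 3, x 4 != y 4,
            x 5 != y 5 | x 6 != y 6].
- exists (y :: t); split => //=.
  move: st; rewrite /tot /=; move: Hd.
  case: (x 0 != y 0); case: (x 1 != y 1); case: (x 2 != y 2); case: (x 3 != y 3);
  case: (x 4 != y 4); case: (x 5 != y 5); case: (x 6 != y 6) => //= _ h; lia.
- have E : forall j, j < 7 -> y j = x j.
    move/negbT: Hd; rewrite !negb_or !negbK => /and5P [/eqP h0 /eqP h1 /eqP h2 /eqP h3 /andP [/eqP h4 /andP [/eqP h5 /eqP h6]]].
    by case=> [|[|[|[|[|[|[|j]]]]]]] //.
  exists t; split.
  + case: t rt {st lt} => [|z t] //= [Pz syz rt]; split => //; exact: pstep_eq syz.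
  + move: st; rewrite /tot /=; lia.
  + move=> j hj; rewrite -lt //; case: (t) => //=; by rewrite E.
Qed.

Lemma recseq_rcons (C : Type) (P : C -> Prop) st x s h :
  recseq P st x (rcons s h) <-> [/\ recseq P st x s, P h & st (last x s) h].
Proof.
elim: s x => [|y s IH] x /=; first by split; [case=> ? ? _; split|case=> _ ? ?; split].
split; first by case=> ? ? /IH [? ? ?].
by case=> [[? ? ?] ? ?]; split => //; apply/IH.
Qed.

Lemma recseq_and (C : Type) (P Q : C -> Prop) st x s :
  recseq P st x s -> (forall i, i < size s -> Q (nth x s i)) ->
  recseq (fun y => P y /\ Q y) st x s.
Proof.
elim: s x => [|y s IH] x //= [Py sxy rs] HQ; split => //.
- by split => //; exact: (HQ 0).
- apply: IH => // i hi; have := HQ i.+1 hi => /=.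
  by rewrite (set_nth_default y).
Qed.

Lemma nchanges_rcons j x s h :
  nchanges j x (rcons s h) = nchanges j x s + (last x s j != h j).
Proof. by elim: s x => [|y s IH] x /=; rewrite ?addn0 // IH addnA. Qed.

Lemma nchanges_const j x s : (forall i, i < size s -> nth x s i j = x j) ->
  nchanges j x s = 0.
Proof.
elim: s x => [|y s IH] x //= H.
have Hy : y j = x j by exact: (H 0).
rewrite Hy eqxx /= IH // => i hi; have := H i.+1 hi => /=.
by rewrite (set_nth_default y) // Hy.
Qed.

Definition fixends (c : nat -> nat) (Ls : nat -> seq nat) :=
  fun c' => pcol Ls c' /\ c' 0 = c 0 /\ c' 6 = c 6.

Lemma core Ls a b c x y : forbidding Ls a b -> pcol Ls c ->
  x \in Ls 0 -> y \in Ls 6 -> (x != a) || (y != b) ->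
  (x = c 0 \/ y = c 6) -> ~ (x = c 0 /\ y = c 6) ->
  exists t h, [/\ recseq (fixends c Ls) pstep c t, size t <= 5,
     pcol Ls h & [/\ h 0 = x, h 6 = y & forall j, 0 < j < 6 -> last c t j = h j]].
Proof.
case=> _ F2 pc hx hy adm ends nboth.
have [s [rs ls0 ls6 nch pre]] := F2 c x y pc hx hy adm ends.
case/lastP: s rs ls0 ls6 nch pre => [|s0 h].
  by move=> _ /= h0 h6; case: nboth.
rewrite last_rcons size_rcons => /recseq_rcons [rs0 ph sth] h0 h6 nch pre.
have pre' : forall i, i < size s0 -> nth c s0 i 0 = c 0 /\ nth c s0 i 6 = c 6.
  move=> i hi; have := pre i.+1; rewrite ltnS => /(_ hi) /=.
  by rewrite nth_rcons hi.
have lastE : last c s0 0 = c 0 /\ last c s0 6 = c 6.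
  have := pre (size s0); rewrite ltnSn => /(_ isT).
  by rewrite -rcons_cons nth_rcons /= ltnSn -last_nth.
have rs0' : recseq (fixends c Ls) pstep c s0.
  by apply: recseq_and rs0 _ => i hi; have [? ?] := pre' i hi.
have [t [rt st lt]] := destut rs0'.
exists t, h; split => //; last split => //.
- move: st; rewrite /tot.
  rewrite (@nchanges_const 0) ?(@nchanges_const 6); first last.
  + by move=> i hi; have [? ?] := pre' i hi.
  + by move=> i hi; have [? ?] := pre' i hi.
  have := nch 1 isT; have := nch 2 isT; have := nch 3 isT; have := nch 4 isT;
  have := nch 5 isT; rewrite !nchanges_rcons; lia.
- move=> j /andP [j0 j6]; rewrite lt ?(ltn_trans j6 (isT : 6 < 7)) //.
  apply/eqP; apply: contraT => hne.
  have [x0|y6] := ends.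
  + have hne0 : last c s0 6 != h 6.
      by rewrite h6 (proj2 lastE); apply/eqP => E; apply: nboth; rewrite -E.
    by have := sth j 6 (ltn_trans j6 (isT : 6 < 7)) isT hne hne0 => E; rewrite E in j6.
  + have hne0 : last c s0 0 != h 0.
      by rewrite h0 (proj1 lastE); apply/eqP => E; apply: nboth; rewrite -E.
    by have := sth j 0 (ltn_trans j6 (isT : 6 < 7)) isT hne hne0 => E; rewrite E in j0.
Qed.

Lemma pathprep_end Ls a b c y : forbidding Ls a b -> pcol Ls c ->
  y \in Ls 6 -> (c 0 != a) || (y != b) ->
  exists t, [/\ recseq (fixends c Ls) pstep c t, size t <= 5 & last c t 5 != y].
Proof.
move=> F pc hy adm.
have [e6|ne6] := eqVneq y (c 6).
  by exists [::]; split => //=; rewrite e6; case: pc => _; apply.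
have [t [h [rt st ph [h0 h6 lt]]]] := core F pc (proj1 pc 0 isT) hy adm (or_introl erefl)
  (fun H => (elimN eqP ne6) (proj2 H)).
by exists t; split => //; rewrite lt // -h6; case: ph => _; apply.
Qed.

Lemma pathprep_start Ls a b c x : forbidding Ls a b -> pcol Ls c ->
  x \in Ls 0 -> (x != a) || (c 6 != b) ->
  exists t, [/\ recseq (fixends c Ls) pstep c t, size t <= 5 & last c t 1 != x].
Proof.
move=> F pc hx adm.
have [e0|ne0] := eqVneq x (c 0).
  by exists [::]; split => //=; rewrite e0 eq_sym; case: pc => _; apply.
have [t [h [rt st ph [h0 h6 lt]]]] := core F pc hx (proj1 pc 6 isT) adm (or_intror erefl)
  (fun H => (elimN eqP ne0) (proj1 H)).
by exists t; split => //; rewrite lt // -h0 eq_sym; case: ph => _; apply.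
Qed.
Section S.
Variables (V : finType) (arc : rel V) (Lint : arcT arc -> 'I_8 -> 'I_5 -> seq nat).
Notation vtx := (vtx arc).
Notation arcT := (arcT arc).

Definition notP (w : vtx) := forall e k i, w <> gP e k i.

Lemma pstart_cases (e : arcT) k : [\/ pstart e k = gV (tailv e), pstart e k = gV (headv e),
   pstart e k = gX e | pstart e k = gY e].
Proof. case: k => [[|[|[|[|[|[|[|[|m]]]]]]]] Hm] //=; by [constructor]. Qed.
Lemma pend_cases (e : arcT) k : [\/ pend e k = gX e, pend e k = gY e | pend e k = gZ e].
Proof. case: k => [[|[|[|[|[|[|[|[|m]]]]]]]] Hm] //=; by [constructor]. Qed.
Lemma pstart_notP (e : arcT) k : notP (pstart e k).
Proof. by case: (pstart_cases e k) => ->. Qed.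
Lemma pend_notP (e : arcT) k : notP (pend e k).
Proof. by case: (pend_cases e k) => ->. Qed.
Lemma pstart_neq_pend (e : arcT) k : pstart e k <> pend e k.
Proof. case: k => [[|[|[|[|[|[|[|[|m]]]]]]]] Hm] //=. Qed.

Lemma pv_gP (e : arcT) k j e' k' i : pv e k j = gP e' k' i -> [/\ e' = e, k' = k, 0 < j < 6 & val i = j.-1].
Proof.
rewrite /pv; case: eqP => [_|/eqP j0]; first by move/(@pstart_notP e k).
case: ifP => [j6|_]; last by move/(@pend_notP e k).
case=> <- <- <-; split => //; first by rewrite lt0n j0.
rewrite /= inordK //; move: j0 j6; case: j => // j _; rewrite ltnS.
Qed.

Lemma pv0 (e : arcT) k : pv e k 0 = pstart e k. Proof. by []. Qed.
Lemma pv6 (e : arcT) k : pv e k 6 = pend e k. Proof. by []. Qed.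
Lemma pvS (e : arcT) k (i : 'I_5) : pv e k i.+1 = gP e k i.
Proof. rewrite /pv /= ltnS (ltn_ord i) inord_val //. Qed.


Definition Ls (e : arcT) k := fun j => Lst Lint (pv e k j).
Definition pc (g : vtx -> nat) (e : arcT) k := fun j => g (pv e k j).
Definition upd (g : vtx -> nat) (e : arcT) k (c : nat -> nat) : vtx -> nat :=
  fun w => match w with
  | gP e' k' i => if (e' == e) && (k' == k) then c i.+1 else g w
  | _ => g w end.

Lemma adj_sym (w1 w2 : vtx) : adj w1 w2 -> adj w2 w1.
Proof. by case; [right|left]. Qed.

Lemma Lcol_pcol g (e : arcT) k : Lcol Lint g -> pcol (Ls e k) (pc g e k).
Proof.
case=> L A; split => [j _|j hj]; first exact: L.
apply: A; left; right; left; by exists e, k, j.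
Qed.

Lemma upd_nP g (e : arcT) k c w : notP w -> upd g e k c w = g w.
Proof. by case: w => //= e' k' i H; case: (H e' k' i). Qed.

Lemma upd_notk g (e : arcT) k c w : (forall i, w <> gP e k i) -> upd g e k c w = g w.
Proof.
case: w => //= e' k' i H; case: ifP => // /andP [/eqP E /eqP K].
by case: (H i); rewrite E K.
Qed.

Lemma upd_pv g (e : arcT) k c e' k' j :
  upd g e k c (pv e' k' j) =
  if ((e' == e) && (k' == k)) && (0 < j < 6) then c j else g (pv e' k' j).
Proof.
rewrite /pv; case: eqP => [->|/eqP j0].
  by rewrite upd_nP ?andbF //; exact: pstart_notP.
case: ifP => [j6|j6]; last by rewrite upd_nP ?andbF //; exact: pend_notP.
rewrite /= lt0n j0 andbT; case: ifP => // _.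
by rewrite inordK; [case: j j0 j6|move: j0 j6; case: j => // j _; rewrite ltnS].
Qed.

Lemma upd_pv_same g (e : arcT) k c j : c 0 = g (pv e k 0) -> c 6 = g (pv e k 6) ->
  j <= 6 -> upd g e k c (pv e k j) = c j.
Proof.
move=> c0 c6 hj; rewrite upd_pv !eqxx /=.
case: j hj => [|j] hj /=; first by rewrite c0.
case: ifP => // /negbT; rewrite -leqNgt => h6.
by have -> : j.+1 = 6 by apply/eqP; rewrite eqn_leq hj h6.
Qed.

Lemma Lcol_upd g (e : arcT) k c : Lcol Lint g -> pcol (Ls e k) c ->
  c 0 = g (pv e k 0) -> c 6 = g (pv e k 6) -> Lcol Lint (upd g e k c).
Proof.
move=> [L A] [pL pA] c0 c6; split.
  case=> //= e' k' i; case: ifP => [/andP [/eqP-> /eqP->]|_]; last exact: L.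
  by have := pL i.+1; rewrite /Ls pvS; apply; rewrite ltnS (leq_trans (ltn_ord i)).
suff H : forall w1 w2, base_edge w1 w2 -> upd g e k c w1 != upd g e k c w2.
  by move=> w1 w2 [/H|/H]; last rewrite eq_sym.
have G : forall w1 w2, base_edge w1 w2 -> notP w1 -> notP w2 ->
    upd g e k c w1 != upd g e k c w2.
  by move=> w1 w2 b n1 n2; rewrite !upd_nP //; apply: A; left.
move=> w1 w2 b; have := G _ _ b; case: b =>
  [[e' [-> [->|->]]] | [[e' [k' [j [hj -> ->]]]] | [[e' [-> ->]] |
   [[-> [->|[->|->]]] | [-> [->|->]]]]]];
  try (by move=> H; apply: H => ? ? ?; discriminate).
move=> _; case E: ((e' == e) && (k' == k)); last first.
  by rewrite !upd_pv E /=; apply: A; left; right; left; exists e', k', j.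
move/andP: E => [/eqP E /eqP K]; subst e' k'.
rewrite !upd_pv_same //; last exact: ltnW.
exact: pA.
Qed.

Lemma gstep_upd g (e : arcT) k c c' : pstep c c' -> gstep (upd g e k c) (upd g e k c').
Proof.
move=> ps.
have key : forall w, upd g e k c w != upd g e k c' w ->
    exists i : 'I_5, w = gP e k i /\ c i.+1 != c' i.+1.
  case=> [v|a|a|a|e' k' i| | | | ] /=; rewrite ?eqxx //.
  case: ifP => [/andP [/eqP-> /eqP->] H|_]; [by exists i|by rewrite eqxx].
move=> w1 w2 /key [i [-> hi]] /key [i' [-> hi']].
have hi5 := ltn_ord i; have hi5' := ltn_ord i'.
have := ps i.+1 i'.+1 _ _ hi hi'; rewrite !ltnS.
by move=> /(_ (ltnW hi5) (ltnW hi5')) [] /val_inj ->.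
Qed.

Lemma upd_pc g (e : arcT) k : upd g e k (pc g e k) = g.
Proof.
apply: functional_extensionality; case=> //= e' k' i.
by case: ifP => // /andP [/eqP-> /eqP->]; rewrite /pc pvS.
Qed.

Lemma recseq_upd g (e : arcT) k : Lcol Lint g -> forall c t,
  recseq (fixends (pc g e k) (Ls e k)) pstep c t ->
  recseq (Lcol Lint) (@gstep V arc) (upd g e k c) (map (upd g e k) t).
Proof.
move=> Lg c t; elim: t c => [|y t IH] c //= [[py [y0 y6]] st rt]; split.
- exact: Lcol_upd.
- exact: gstep_upd.
- exact: IH.
Qed.


Lemma recseq_cat (C : Type) (P : C -> Prop) st x s1 s2 :
  recseq P st x s1 -> recseq P st (last x s1) s2 -> recseq P st x (s1 ++ s2).
Proof. by elim: s1 x => [|y s IH] x //= [? ? ?] ?; split => //; apply: IH. Qed.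

Lemma recseq_last (C : Type) (P : C -> Prop) st x s :
  recseq P st x s -> P x -> P (last x s).
Proof. by elim: s x => [|y s IH] x //= [? ? ?] _; apply: IH. Qed.

Definition Rk (e : arcT) (w0 : vtx) (t : nat) (g : vtx -> nat) k :=
  (pend e k = w0 -> g (pv e k 5) != t) /\ (pstart e k = w0 -> g (pv e k 1) != t).

Lemma prepall (e : arcT) (w0 : vtx) (t : nat) (ks : seq 'I_8) g :
  (forall e k, forbidding (Ls e k) (fa k) (fb k)) ->
  t \in Lst Lint w0 -> uniq ks -> Lcol Lint g ->
  (forall k, k \in ks -> pend e k = w0 -> (g (pstart e k) != fa k) || (t != fb k)) ->
  (forall k, k \in ks -> pstart e k = w0 -> (t != fa k) || (g (pend e k) != fb k)) ->
  exists s, [/\ recseq (Lcol Lint) (@gstep V arc) g s, size s <= 5 * size ks,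
    (forall k, k \in ks -> Rk e w0 t (last g s) k) &
    forall w, (forall k i, k \in ks -> w <> gP e k i) -> last g s w = g w].
Proof.
move=> F ht; elim: ks g => [|k ks IH] g.
  by move=> _ _ _ _; exists [::]; split.
rewrite cons_uniq => /andP [kks uks] Lg He Hs.
have [tp [rtp stp Rt]] : exists tp, [/\ recseq (fixends (pc g e k) (Ls e k)) pstep (pc g e k) tp,
    size tp <= 5 & (pend e k = w0 -> last (pc g e k) tp 5 != t) /\
                   (pstart e k = w0 -> last (pc g e k) tp 1 != t)].
  case: (classic (pend e k = w0)) => [Hend|Hnend].
    have hy : t \in Ls e k 6 by rewrite /Ls pv6 Hend.
    have [tp [r1 r2 r3]] := @pathprep_end _ _ _ _ t (F e k) (Lcol_pcol e k Lg)
      hy (He k (mem_head _ _) Hend).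
    exists tp; split => //; split => // Hst.
    by case: (@pstart_neq_pend e k); rewrite Hst Hend.
  case: (classic (pstart e k = w0)) => [Hst|Hnst].
    have hx : t \in Ls e k 0 by rewrite /Ls pv0 Hst.
    have [tp [r1 r2 r3]] := @pathprep_start _ _ _ _ t (F e k) (Lcol_pcol e k Lg)
      hx (Hs k (mem_head _ _) Hst).
    by exists tp; split.
  by exists [::]; split.
set g1 := upd g e k (last (pc g e k) tp).
have r1 := recseq_upd Lg rtp; rewrite upd_pc in r1.
have l1 : last g (map (upd g e k) tp) = g1.
  by rewrite -{1}(upd_pc g e k) last_map.
have Lg1 : Lcol Lint g1 by rewrite -l1; apply: recseq_last r1 Lg.
have g1nP : forall w, notP w -> g1 w = g w by move=> w hw; rewrite /g1 upd_nP.
have He1 : forall k', k' \in ks -> pend e k' = w0 -> (g1 (pstart e k') != fa k') || (t != fb k').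
  move=> k' hk' E; rewrite g1nP; last exact: pstart_notP.
  by apply: He => //; rewrite inE hk' orbT.
have Hs1 : forall k', k' \in ks -> pstart e k' = w0 -> (t != fa k') || (g1 (pend e k') != fb k').
  move=> k' hk' E; rewrite g1nP; last exact: pend_notP.
  by apply: Hs => //; rewrite inE hk' orbT.
have [s2 [r2 st2 R2 A2]] := IH g1 uks Lg1 He1 Hs1.
exists (map (upd g e k) tp ++ s2); split.
- apply: recseq_cat => //; by rewrite l1.
- by rewrite size_cat size_map /=; lia.
- rewrite last_cat l1 => k'; rewrite inE => /orP [/eqP ->|hk']; last exact: R2.
  have nk : forall j, (forall k'' i, k'' \in ks -> pv e k j.+1 <> gP e k'' i).
    move=> j k'' i hk'' /pv_gP [_ E _ _]; by move: kks; rewrite -E hk''.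
  rewrite /Rk -[5]/(4.+1) -[1]/(0.+1) !A2; try exact: nk.
  rewrite /g1 !upd_pv !eqxx /=.
  exact: Rt.
- move=> w hw; rewrite last_cat l1 A2; last by move=> k' i hk'; apply: hw; rewrite inE hk' orbT.
  by rewrite /g1 upd_notk // => i; apply: hw; rewrite mem_head.
Qed.


Definition endpt (e : arcT) (w0 : vtx) := w0 = gX e \/ w0 = gY e \/ w0 = gZ e.

Lemma endpt_nP e w0 : endpt e w0 -> notP w0.
Proof. by case=> [->|[->|->]] ? ? ?. Qed.

Lemma endpoint_e (e e' : arcT) w0 k : endpt e w0 ->
  (pend e' k = w0 -> e' = e) /\ (pstart e' k = w0 -> e' = e).
Proof.
move=> H; split; [case: (pend_cases e' k) => ->|case: (pstart_cases e' k) => ->];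
  case: H => [->|[->|->]] => //; by case.
Qed.

Lemma pv_notP_idx (e : arcT) k j : notP (pv e k j) -> j = 0 \/ 6 <= j.
Proof.
rewrite /pv; case: eqP => [->|_]; first by left.
by case: ifP => [_ H|/negbT]; [case: (H e k (inord j.-1))|rewrite -leqNgt; right].
Qed.

Lemma adj_gP_end (e : arcT) w0 e' k i : endpt e w0 -> adj (gP e' k i) w0 ->
  (pend e k = w0 /\ gP e' k i = pv e k 5) \/ (pstart e k = w0 /\ gP e' k i = pv e k 1).
Proof.
move=> H b; have nP := endpt_nP H; have [pe ps] := endpoint_e e' k H.
case: b => b.
- case: b => [[e'' [E1 E2]] | [[e'' [k'' [j [hj E1 E2]]]] | [[e'' [E1 E2]] |
     [[E1 E2] | [E1 E2]]]]]; try discriminate E1.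
  case/esym/pv_gP: E1 => E K /andP [j0 j6] vi; subst e'' k''.
  have j5 : j = 5.
    rewrite E2 in nP; case: (pv_notP_idx nP) => // h; apply/eqP; rewrite eqn_leq.
    by rewrite -ltnS j6 -ltnS h.
  subst j; have ee : e' = e by apply: pe; rewrite E2.
  subst e'; left; split; first by rewrite E2.
  have vi4 : val i = 4 by rewrite vi.
  by rewrite -[5]/(4.+1) -vi4 pvS.
- case: b => [[e'' [E1 E2]] | [[e'' [k'' [j [hj E1 E2]]]] | [[e'' [E1 E2]] |
     [[E1 E2] | [E1 E2]]]]];
    try (by rewrite E1 in H; case: H => [H|[H|H]]; discriminate H); try discriminate E2.
  case/esym/pv_gP: E2 => E K /andP [j0 j6] vi; subst e'' k''.
  have j0' : j = 0.
    rewrite E1 in nP; case: (pv_notP_idx nP) => // h.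
    by move: j6 h; lia.
  subst j; have ee : e' = e by apply: ps; rewrite E1.
  subst e'; right; split; first by rewrite E1.
  have vi0 : val i = 0 by rewrite vi.
  by rewrite -[1]/(0.+1) -vi0 pvS.
Qed.


Definition setv (g : vtx -> nat) (w0 : vtx) (t : nat) : vtx -> nat :=
  fun w => if excluded_middle_informative (w = w0) then t else g w.

Lemma setv_eq g w0 t : setv g w0 t w0 = t.
Proof. by rewrite /setv; case: excluded_middle_informative. Qed.
Lemma setv_neq g w0 t w : w <> w0 -> setv g w0 t w = g w.
Proof. by rewrite /setv; case: excluded_middle_informative. Qed.

Lemma Lcol_setv g w0 t : Lcol Lint g -> t \in Lst Lint w0 ->
  (forall w, adj w w0 -> g w != t) -> Lcol Lint (setv g w0 t).
Proof.
move=> [L A] ht N; split.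
  by move=> w; case: (classic (w = w0)) => [->|h]; rewrite ?setv_eq ?setv_neq.
move=> w1 w2 a.
case: (classic (w1 = w0)) => [E1|h1]; case: (classic (w2 = w0)) => [E2|h2].
- by subst; have := A _ _ a; rewrite eqxx.
- by subst; rewrite setv_eq setv_neq // eq_sym; apply: N; apply: adj_sym.
- by subst; rewrite setv_eq setv_neq //; apply: N.
- by rewrite !setv_neq //; apply: A.
Qed.

Lemma gstep_setv g w0 t : gstep g (setv g w0 t).
Proof.
move=> w1 w2 h1 h2.
case: (classic (w1 = w0)) => [->|n1]; last by rewrite setv_neq ?eqxx in h1.
case: (classic (w2 = w0)) => [->|n2] //; by rewrite setv_neq ?eqxx in h2.
Qed.

Lemma recolor (e : arcT) w0 t g :
  (forall e k, forbidding (Ls e k) (fa k) (fb k)) -> endpt e w0 -> Lcol Lint g ->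
  t \in Lst Lint w0 ->
  (forall w, adj w w0 -> notP w -> g w != t) ->
  (forall k, pend e k = w0 -> (g (pstart e k) != fa k) || (t != fb k)) ->
  (forall k, pstart e k = w0 -> (t != fa k) || (g (pend e k) != fb k)) ->
  exists s, [/\ recseq (Lcol Lint) (@gstep V arc) g s, size s <= 41,
    last g s w0 = t & forall w, w <> w0 -> notP w -> last g s w = g w].
Proof.
move=> F ep Lg ht N He Hs.
have [s1 [r1 st1 R1 A1]] := prepall (ks := enum 'I_8) F ht (enum_uniq _) Lg
  (fun k _ => He k) (fun k _ => Hs k).
set g1 := last g s1.
have Lg1 : Lcol Lint g1 by apply: recseq_last r1 Lg.
have A1' : forall w, notP w -> g1 w = g w.
  by move=> w hw; apply: A1 => k i _; apply: hw.
exists (rcons s1 (setv g1 w0 t)); split.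
- rewrite -cats1; apply: recseq_cat => //=; split => //; last exact: gstep_setv.
  apply: Lcol_setv => // w; case: (classic (notP w)) => [hw|hw] a.
    by rewrite A1' //; apply: N.
  have [e' [k [i E]]] : exists e' k i, w = gP e' k i.
    apply: NNPP => H; apply: hw => e' k i E; apply: H; by exists e', k, i.
  subst w; have [k8 _] := R1 k (mem_enum _ _).
  case: (adj_gP_end ep a) => [[pe ->]|[ps ->]].
    by have [R _] := R1 k (mem_enum _ _); apply: R.
  by have [_ R] := R1 k (mem_enum _ _); apply: R.
- by rewrite size_rcons; move: st1; rewrite size_enum_ord.
- by rewrite last_rcons setv_eq.
- by move=> w n hw; rewrite last_rcons setv_neq // A1'.
Qed.


Lemma pv_pair_P (e : arcT) k j : j < 6 -> notP (pv e k j) -> notP (pv e k j.+1) -> False.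
Proof.
move=> hj /pv_notP_idx h1 /pv_notP_idx h2; lia.
Qed.

Lemma endpt_cases e w0 : endpt e w0 -> forall P : Prop,
  (w0 = gX e -> P) -> (w0 = gY e -> P) -> (w0 = gZ e -> P) -> P.
Proof. by case=> [->|[->|->]] P a b c; [apply: a|apply: b|apply: c]. Qed.

Lemma nb_end (e : arcT) w0 w : endpt e w0 -> adj w w0 -> notP w ->
  (w0 = gZ e -> w = gc) /\ (w0 <> gZ e -> w = gV (tailv e)).
Proof.
move=> ep a nw; have nw0 := endpt_nP ep.
case: a => b; case: b =>
  [[e' [E1 [E2|E2]]] | [[e' [k [j [hj E1 E2]]]] | [[e' [E1 E2]] |
   [[E1 [E2|[E2|E2]]] | [E1 [E2|E2]]]]]];
  subst; try (by case: ep => [E|[E|E]]; discriminate E);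
  try (by case: (pv_pair_P hj nw nw0)); try (by case: (pv_pair_P hj nw0 nw)).
- by case: ep => [[->]|[E|E]]; try discriminate E; split.
- by case: ep => [E|[[->]|E]]; try discriminate E; split.
- by case: ep => [E|[E|[->]]]; try discriminate E; split.
Qed.

Lemma forb_adm g (e : arcT) k : Lcol Lint g -> forbidding (Ls e k) (fa k) (fb k) ->
  (g (pstart e k) != fa k) || (g (pend e k) != fb k).
Proof.
move=> Lg [F1 _]; have pcl := Lcol_pcol e k Lg.
apply/(F1 (g (pstart e k)) (g (pend e k))).
- exact: (proj1 pcl 0 isT).
- exact: (proj1 pcl 6 isT).
- by exists (pc g e k).
Qed.


Lemma ord8_all (P : 'I_8 -> Prop) :
  P (@Ordinal 8 0 isT) -> P (@Ordinal 8 1 isT) -> P (@Ordinal 8 2 isT) ->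
  P (@Ordinal 8 3 isT) -> P (@Ordinal 8 4 isT) -> P (@Ordinal 8 5 isT) ->
  P (@Ordinal 8 6 isT) -> P (@Ordinal 8 7 isT) -> forall k, P k.
Proof.
move=> p0 p1 p2 p3 p4 p5 p6 p7 [m Hm].
do 8 (case: m Hm => [|m] Hm; first by rewrite (bool_irrelevance Hm isT)).
by [].
Qed.

Lemma ord8_cases (k : 'I_8) :
  k = @Ordinal 8 0 isT \/ k = @Ordinal 8 1 isT \/ k = @Ordinal 8 2 isT \/
  k = @Ordinal 8 3 isT \/ k = @Ordinal 8 4 isT \/ k = @Ordinal 8 5 isT \/
  k = @Ordinal 8 6 isT \/ k = @Ordinal 8 7 isT.
Proof.
move: k; apply: ord8_all.
- by left.
- by right; left.
- by do 2 right; left.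
- by do 3 right; left.
- by do 4 right; left.
- by do 5 right; left.
- by do 6 right; left.
- by do 7 right.
Qed.

Lemma twostep (e : arcT) w1 t1 t2 g :
  (forall e k, forbidding (Ls e k) (fa k) (fb k)) -> endpt e w1 -> w1 <> gZ e ->
  Lcol Lint g -> t1 \in Lst Lint w1 ->
  (forall w, adj w w1 -> notP w -> g w != t1) ->
  (forall k, pend e k = w1 -> (g (pstart e k) != fa k) || (t1 != fb k)) ->
  (forall k, pstart e k = w1 -> (t1 != fa k) || (g (pend e k) != fb k)) ->
  (forall g1, Lcol Lint g1 -> g1 w1 = t1 -> (forall w, w <> w1 -> notP w -> g1 w = g w) ->
   [/\ t2 \in Lst Lint (gZ e), (forall w, adj w (gZ e) -> notP w -> g1 w != t2),
       (forall k, pend e k = gZ e -> (g1 (pstart e k) != fa k) || (t2 != fb k)) &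
       (forall k, pstart e k = gZ e -> (t2 != fa k) || (g1 (pend e k) != fb k))]) ->
  exists s, [/\ recseq (Lcol Lint) (@gstep V arc) g s, size s <= 82,
    last g s (gZ e) = t2 &
    forall w, w <> w1 -> w <> gZ e -> notP w -> last g s w = g w].
Proof.
move=> F ep1 n1 Lg ht1 N1 He1 Hs1 Second.
have [s1 [r1 st1 l1 A1]] := recolor F ep1 Lg ht1 N1 He1 Hs1.
have Lg1 : Lcol Lint (last g s1) by apply: recseq_last r1 Lg.
have [ht2 N2 He2 Hs2] := Second _ Lg1 l1 A1.
have epz : endpt e (gZ e) by right; right.
have [s2 [r2 st2 l2 A2]] := recolor F epz Lg1 ht2 N2 He2 Hs2.
exists (s1 ++ s2); split.
- exact: recseq_cat.
- by rewrite size_cat; lia.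
- by rewrite last_cat.
- by move=> w h1 hz nw; rewrite last_cat A2 // A1.
Qed.

Lemma arith1 (u v x y z : nat) : u = v -> u \in [::1;2;3] -> x \in [::1;2;4] -> y \in [::3;4] ->
  z \in [::1;2;4] -> u != x -> u != y -> (u != 1) || (x != 2) -> (u != 3) || (x != 1) ->
  (u != 2) || (y != 3) -> (v != 2) || (x != 1) -> (v != 3) || (x != 2) ->
  (v != 1) || (y != 3) -> (x != 4) || (z != 1) -> (y != 4) || (z != 2) -> z = 4.
Proof.
move=> <-.
rewrite !inE => /or3P [] /eqP-> /or3P [] /eqP-> /orP [] /eqP-> /or3P [] /eqP-> //.
Qed.


Lemma main_sec g (e : arcT) :
  (forall e k, forbidding (Ls e k) (fa k) (fb k)) -> Lcol Lint g ->
    (g (gV (tailv e)) = g (gV (headv e)) -> g (gZ e) = 4) /\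
    (g (gV (tailv e)) != g (gV (headv e)) ->
     exists s : seq (vtx -> nat),
       [/\ recseq (Lcol Lint) (@gstep V arc) g s,
           size s <= 82,
           (last g s) (gZ e) != 4,
           (forall u : V, (last g s) (gV u) = g (gV u)) &
           (forall f : arcT, f <> e -> (last g s) (gZ f) = g (gZ f))]).
Proof.
move=> F Lg; have [L A] := Lg.
have a0 := @forb_adm g e (@Ordinal 8 0 isT) Lg (F e _).
have a1 := @forb_adm g e (@Ordinal 8 1 isT) Lg (F e _).
have a2 := @forb_adm g e (@Ordinal 8 2 isT) Lg (F e _).
have a3 := @forb_adm g e (@Ordinal 8 3 isT) Lg (F e _).
have a4 := @forb_adm g e (@Ordinal 8 4 isT) Lg (F e _).
have a5 := @forb_adm g e (@Ordinal 8 5 isT) Lg (F e _).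
have a6 := @forb_adm g e (@Ordinal 8 6 isT) Lg (F e _).
have a7 := @forb_adm g e (@Ordinal 8 7 isT) Lg (F e _).
simpl in a0, a1, a2, a3, a4, a5, a6, a7.
have Hu := L (gV (tailv e)); have Hv := L (gV (headv e)); have Hx := L (gX e);
have Hy := L (gY e); have Hz := L (gZ e); have Hc := L gc.
simpl in Hu, Hv, Hx, Hy, Hz, Hc.
have ux : g (gV (tailv e)) != g (gX e).
  by apply: A; left; left; exists e; split; [|left].
have uy : g (gV (tailv e)) != g (gY e).
  by apply: A; left; left; exists e; split; [|right].
have zc : g (gZ e) != g gc.
  by apply: A; left; right; right; left; exists e.
split.
  by move=> uv; apply: (arith1 uv Hu Hx Hy Hz ux uy a0 a1 a2 a3 a4 a5 a6 a7).
move=> uv.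
case: (eqVneq (g (gZ e)) 4) => [z4|z4]; last first.
  by exists [::]; split.
have c3 : g gc = 3.
  by move: Hc zc; rewrite z4 !inE => /orP [] /eqP -> .
have final : forall w1 t2, (w1 = gX e \/ w1 = gY e) -> t2 != 4 ->
  (exists s, [/\ recseq (Lcol Lint) (@gstep V arc) g s, size s <= 82,
    last g s (gZ e) = t2 &
    forall w, w <> w1 -> w <> gZ e -> notP w -> last g s w = g w]) ->
  exists s : seq (vtx -> nat),
    [/\ recseq (Lcol Lint) (@gstep V arc) g s, size s <= 82, last g s (gZ e) != 4,
        forall u : V, last g s (gV u) = g (gV u)
      & forall f : arcT, f <> e -> last g s (gZ f) = g (gZ f)].
  move=> w1 t2 hw t2n [s [r st l Ag]]; exists s; split => //; first by rewrite l.
    by move=> u0; apply: Ag => //; case: hw => ->.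
  move=> f fe; apply: Ag => //; first by case: hw => ->.
  by case=> E; apply: fe.
have epX : endpt e (gX e) by left.
have epY : endpt e (gY e) by right; left.
have epz : endpt e (gZ e) by right; right.
move: Hu; rewrite !inE => /or3P [] /eqP Hu1; rewrite Hu1 in uv.
- apply: (final (gY e) 2) => //; first by right.
  apply: (twostep (t1 := 3)) => //.
  + by move=> w a nw; rewrite (proj2 (nb_end epY a nw)) // Hu1.
  + move=> k; case: (ord8_cases k) => [|[|[|[|[|[|[|]]]]]]] ->; cbn => E; try discriminate E; cbn; rewrite ?Hu1;
      move: uv; case: (g (gV (headv e))) => [|[|[|[|n]]]] //.
  + move=> k; case: (ord8_cases k) => [|[|[|[|[|[|[|]]]]]]] ->; cbn => E; try discriminate E; cbn; rewrite ?Hu1;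
      move: uv; case: (g (gV (headv e))) => [|[|[|[|n]]]] //.
  + move=> g1 Lg1 h1 Ag1; split => //.
    * move=> w a nw; rewrite (proj1 (nb_end epz a nw)) //; rewrite Ag1 ?c3 //; move=> *; discriminate.
    * move=> k; case: (ord8_cases k) => [|[|[|[|[|[|[|]]]]]]] ->; cbn => E; try discriminate E; cbn; rewrite ?h1 ?orbT //.
    * move=> k; case: (ord8_cases k) => [|[|[|[|[|[|[|]]]]]]] ->; cbn => E; discriminate E.
- apply: (final (gX e) 1) => //; first by left.
  apply: (twostep (t1 := 1)) => //.
  + by move=> w a nw; rewrite (proj2 (nb_end epX a nw)) // Hu1.
  + move=> k; case: (ord8_cases k) => [|[|[|[|[|[|[|]]]]]]] ->; cbn => E; try discriminate E; cbn; rewrite ?Hu1;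
      move: uv; case: (g (gV (headv e))) => [|[|[|[|n]]]] //.
  + move=> k; case: (ord8_cases k) => [|[|[|[|[|[|[|]]]]]]] ->; cbn => E; try discriminate E; cbn; rewrite ?Hu1;
      move: uv; case: (g (gV (headv e))) => [|[|[|[|n]]]] //.
  + move=> g1 Lg1 h1 Ag1; split => //.
    * move=> w a nw; rewrite (proj1 (nb_end epz a nw)) //; rewrite Ag1 ?c3 //; move=> *; discriminate.
    * move=> k; case: (ord8_cases k) => [|[|[|[|[|[|[|]]]]]]] ->; cbn => E; try discriminate E; cbn; rewrite ?h1 ?orbT //.
    * move=> k; case: (ord8_cases k) => [|[|[|[|[|[|[|]]]]]]] ->; cbn => E; discriminate E.
- apply: (final (gX e) 1) => //; first by left.
  apply: (twostep (t1 := 2)) => //.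
  + by move=> w a nw; rewrite (proj2 (nb_end epX a nw)) // Hu1.
  + move=> k; case: (ord8_cases k) => [|[|[|[|[|[|[|]]]]]]] ->; cbn => E; try discriminate E; cbn; rewrite ?Hu1;
      move: uv; case: (g (gV (headv e))) => [|[|[|[|n]]]] //.
  + move=> k; case: (ord8_cases k) => [|[|[|[|[|[|[|]]]]]]] ->; cbn => E; try discriminate E; cbn; rewrite ?Hu1;
      move: uv; case: (g (gV (headv e))) => [|[|[|[|n]]]] //.
  + move=> g1 Lg1 h1 Ag1; split => //.
    * move=> w a nw; rewrite (proj1 (nb_end epz a nw)) //; rewrite Ag1 ?c3 //; move=> *; discriminate.
    * move=> k; case: (ord8_cases k) => [|[|[|[|[|[|[|]]]]]]] ->; cbn => E; try discriminate E; cbn; rewrite ?h1 ?orbT //.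
    * move=> k; case: (ord8_cases k) => [|[|[|[|[|[|[|]]]]]]] ->; cbn => E; discriminate E.
Qed.

End S.

Theorem mainTheorem6 :
  exists C : nat,
  forall (V : finType) (arc : rel V)
         (Lint : arcT arc -> 'I_8 -> 'I_5 -> seq nat),
    (forall u, ~~ arc u u) ->
    (forall u v, arc u v -> ~~ arc v u) ->
    (forall e k i x, x \in Lint e k i -> x \in [:: 1; 2; 3; 4]) ->
    (forall e k, forbidding (fun j => Lst Lint (pv e k j)) (fa k) (fb k)) ->
  forall (g : vtx arc -> nat) (e : arcT arc),
    Lcol Lint g ->
    (g (gV (tailv e)) = g (gV (headv e)) -> g (gZ e) = 4) /\
    (g (gV (tailv e)) != g (gV (headv e)) ->
     exists s : seq (vtx arc -> nat),
       [/\ recseq (Lcol Lint) (@gstep V arc) g s,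
           size s <= C,
           (last g s) (gZ e) != 4,
           (forall u : V, (last g s) (gV u) = g (gV u)) &
           (forall f : arcT arc, f <> e -> (last g s) (gZ f) = g (gZ f))]).
Proof.
exists 82 => V arc Lint _ _ _ F g e Lg.
apply: main_sec => //.
Qed.
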